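(* Let $k\in\mathbb{N}$ with $\gcd(k,6)=1$, let $h$ be an integer with $\gcd(h,k)=1$, and let $h'$ be an integer with $hh'\equiv-1\pmod{k}$ and $6\mid h'$. Then $$\frac{\omega_{6h,k}\,\omega_{2h,k}\,\omega_{h,k}}{\omega_{3h,k}}=\exp\!\left(- \frac{2\pi i}{36k} \left(-9k+9k^2+h (-9+9k^2) + h'(2-2k^2) \right)\right)$$ and $$\frac{\omega_{3h,k}\,\omega_{2h,k}\,\omega_{h,k}}{\omega_{6h,k}^3} =\exp\!\left(\frac{2\pi i}{18k} \left(9h ( k^2-1) + h'(k^2-1) \right)\right).$$
   Context: For coprime integers $h$ and $K\ge1$, $\omega_{h,K}=\exp(\pi i\, s(h,K))$, where $s(h,K)=\sum_{r=1}^{K-1}\frac{r}{K}\left(\frac{hr}{K}-\lfloor \frac{hr}{K}\rfloor-\frac12\right)$ is the Dedekind sum (the multiplier of the Dedekind eta function). *)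

(* Defs.v *)
From Stdlib Require Import Reals ZArith List.
From Coquelicot Require Export Coquelicot.
Export ListNotations.

Open Scope R_scope.

Definition cexpi (t : R) : C := (cos t, sin t).

(* floor: Stdlib's Int_part x = up x - 1 is the floor of x *)
Definition Rfloor (x : R) : Z := Int_part x.

Definition dedekind_s (h : Z) (K : nat) : R :=
  fold_right Rplus 0
    (map (fun r : nat =>
            (INR r / INR K) *
            (IZR h * INR r / INR K - IZR (Rfloor (IZR h * INR r / INR K)) - 1 / 2))
         (seq 1 (K - 1))).

Definition omega (h : Z) (K : nat) : C := cexpi (PI * dedekind_s h K).

(* Main.v *)
Require Import Defs.
From Stdlib Require Import Reals ZArith.
From Coquelicot Require Import Coquelicot.
From Stdlib Require Import List Lia Lra Permutation Znumtheory.

(* Proof: reduce Dedekind sums to integer sums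
   T(a) = sum_{x=1}^{k-1} x * (a x mod k); derive congruences mod 36k^2 / 18k^2. *)

Open Scope Z_scope.

Definition sumZ (f : Z -> Z) (l : list Z) : Z := fold_right (fun x acc => f x + acc) 0 l.
Definition LZ (k : nat) : list Z := map Z.of_nat (seq 1 (k-1)).

Lemma sumZ_perm f l l' : Permutation l l' -> sumZ f l = sumZ f l'.
Proof. induction 1; simpl; lia. Qed.

Lemma sumZ_map f g l : sumZ f (map g l) = sumZ (fun x => f (g x)) l.
Proof. induction l; simpl; auto. rewrite IHl; auto. Qed.

Lemma sumZ_ext f g l : (forall x, In x l -> f x = g x) -> sumZ f l = sumZ g l.
Proof. induction l; simpl; intros H; auto. rewrite H, IHl; auto. Qed.

Lemma sumZ_app f l l' : sumZ f (l ++ l') = sumZ f l + sumZ f l'.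
Proof. induction l; simpl; lia. Qed.

Lemma sumZ_lin2 f g c d l : sumZ (fun x => c * f x + d * g x) l = c * sumZ f l + d * sumZ g l.
Proof. induction l; simpl; [ring|]. rewrite IHl; ring. Qed.

Lemma sumZ_lin3 f g h c d e l :
  sumZ (fun x => c * f x + d * g x + e * h x) l = c * sumZ f l + d * sumZ g l + e * sumZ h l.
Proof. induction l; simpl; [ring|]. rewrite IHl; ring. Qed.

Lemma in_LZ k x : In x (LZ k) <-> 1 <= x <= Z.of_nat k - 1.
Proof.
  unfold LZ. rewrite in_map_iff. split.
  - intros [n [<- Hn]]. apply in_seq in Hn. lia.
  - intros H. exists (Z.to_nat x). split; [lia|]. apply in_seq. lia.
Qed.

Lemma perm_mul k a : Z.gcd a (Z.of_nat k) = 1 ->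
  Permutation (map (fun x => (a * x) mod Z.of_nat k) (LZ k)) (LZ k).
Proof.
  intros Hg. set (K := Z.of_nat k) in *. assert (HK0: K = Z.of_nat k) by reflexivity. clearbody K.
  destruct (Nat.eq_dec k 0) as [Hk|Hk].
  { subst k. simpl. constructor. }
  assert (HK : 0 < K) by (subst K; lia).
  assert (Hg' : Z.gcd K a = 1) by (rewrite Z.gcd_comm; auto).
  apply NoDup_Permutation_bis.
  - apply NoDup_map_NoDup_ForallPairs.
    + intros x y Hx Hy Hxy. cbv beta in Hxy. apply in_LZ in Hx, Hy. rewrite <- HK0 in Hx, Hy.
      assert (Hd : (K | a * (x - y))).
      { pose proof (Z.div_mod (a*x) K ltac:(lia)). pose proof (Z.div_mod (a*y) K ltac:(lia)).
        exists (a*x/K - a*y/K). set (qx := a*x/K) in *. set (qy := a*y/K) in *. set (rx := (a*x) mod K) in *. set (ry := (a*y) mod K) in *. rewrite Z.mul_sub_distr_l, Z.mul_sub_distr_r, H, H0, Hxy; ring. }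
      apply Z.gauss in Hd; auto. destruct Hd as [t Ht]. assert (t = 0) by (destruct (Z.lt_trichotomy t 0) as [?|[?|?]]; nia). subst t. lia.
    + unfold LZ. apply FinFun.Injective_map_NoDup; [intros ? ? ?; lia|]. apply seq_NoDup.
  - rewrite length_map; lia.
  - intros z Hz. apply in_map_iff in Hz. destruct Hz as [x [<- Hx]].
    apply in_LZ in Hx. apply in_LZ. rewrite <- HK0 in Hx |- *.
    pose proof (Z.mod_pos_bound (a*x) K HK).
    assert ((a*x) mod K <> 0).
    { intros H0. apply Z.mod_divide in H0; [|lia]. apply Z.gauss in H0; auto.
      destruct H0 as [t Ht]. assert (t = 0) by (destruct (Z.lt_trichotomy t 0) as [?|[?|?]]; nia). subst t. lia. }
    lia.
Qed.

Lemma reindex k a f : Z.gcd a (Z.of_nat k) = 1 ->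
  sumZ f (LZ k) = sumZ (fun x => f ((a * x) mod Z.of_nat k)) (LZ k).
Proof.
  intros Hg. rewrite <- (sumZ_map f (fun x => (a * x) mod Z.of_nat k)). symmetry. apply sumZ_perm. apply perm_mul; auto.
Qed.

Lemma sumZ_single f x : sumZ f (x :: nil) = f x.
Proof. simpl. ring. Qed.

Lemma sum_id n : 2 * sumZ (fun x => x) (map Z.of_nat (seq 1 n)) = Z.of_nat n * (Z.of_nat n + 1).
Proof.
  induction n; [simpl; lia|]. rewrite seq_S, map_app, sumZ_app. cbn [map]. rewrite sumZ_single.
  rewrite Z.mul_add_distr_l, IHn. rewrite !Nat2Z.inj_succ. unfold Z.succ. ring.
Qed.

Lemma sum_sq n : 6 * sumZ (fun x => x * x) (map Z.of_nat (seq 1 n))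
   = Z.of_nat n * (Z.of_nat n + 1) * (2 * Z.of_nat n + 1).
Proof.
  induction n; [simpl; lia|]. rewrite seq_S, map_app, sumZ_app. cbn [map]. rewrite sumZ_single.
  rewrite Z.mul_add_distr_l, IHn. rewrite !Nat2Z.inj_succ. unfold Z.succ. ring.
Qed.

Lemma rho_range k a x : Z.gcd a (Z.of_nat k) = 1 -> 1 <= x <= Z.of_nat k - 1 ->
  1 <= (a * x) mod Z.of_nat k <= Z.of_nat k - 1.
Proof.
  intros Hg Hx. set (K := Z.of_nat k) in *. assert (HK0: K = Z.of_nat k) by reflexivity. clearbody K.
  assert (HK : 0 < K) by lia.
  assert (Hg' : Z.gcd K a = 1) by (rewrite Z.gcd_comm; auto).
  pose proof (Z.mod_pos_bound (a*x) K HK).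
  assert ((a*x) mod K <> 0).
  { intros H0. apply Z.mod_divide in H0; [|lia]. apply Z.gauss in H0; auto.
    destruct H0 as [t Ht]. assert (t = 0) by (destruct (Z.lt_trichotomy t 0) as [?|[?|?]]; nia). subst t. lia. }
  lia.
Qed.

Lemma mod_lin x K q : 0 <= x - q*K < K -> x mod K = x - q*K.
Proof. intros H. symmetry. apply (Z.mod_unique x K q). lia. ring. Qed.

Lemma sumZ_add4 f1 f2 f3 f4 l :
  sumZ f1 l + sumZ f2 l + sumZ f3 l + sumZ f4 l = sumZ (fun x => f1 x + f2 x + f3 x + f4 x) l.
Proof. induction l; simpl; [ring|]. rewrite <- IHl. ring. Qed.

Definition Tz k a := sumZ (fun x => x * ((a*x) mod Z.of_nat k)) (LZ k).
Definition Qz k a := sumZ (fun x => (a*x / Z.of_nat k) * (a*x / Z.of_nat k)) (LZ k).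

Lemma L1 k a : (1 <= k)%nat -> Z.gcd a (Z.of_nat k) = 1 ->
  12*a*Tz k a = (1+a*a)*Z.of_nat k*((Z.of_nat k-1)*(2*Z.of_nat k-1)) - 6*Z.of_nat k*Z.of_nat k*Qz k a.
Proof.
  intros Hk Hg.
  assert (H3 : 6 * sumZ (fun x => x*x) (LZ k) = (Z.of_nat k - 1) * Z.of_nat k * (2*Z.of_nat k - 1)).
  { unfold LZ. rewrite sum_sq. replace (Z.of_nat (k-1)) with (Z.of_nat k - 1) by lia. ring. }
  assert (H2 : sumZ (fun x => x*x) (LZ k) = sumZ (fun x => ((a*x) mod Z.of_nat k)*((a*x) mod Z.of_nat k)) (LZ k)).
  { apply (reindex k a (fun y => y*y)); auto. }
  unfold Tz, Qz.
  set (K := Z.of_nat k) in *. assert (HK : 0 < K) by (subst K; lia). clearbody K.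
  set (F := sumZ (fun x => x * (a*x/K)) (LZ k)).
  set (S2 := sumZ (fun x => x*x) (LZ k)) in *.
  assert (H1 : sumZ (fun x => x * ((a*x) mod K)) (LZ k) = a*S2 + (-K)*F).
  { rewrite (sumZ_ext _ (fun x => a*(x*x) + (-K)*(x*(a*x/K)))).
    - rewrite sumZ_lin2. reflexivity.
    - intros x _. rewrite Z.mod_eq by lia. ring. }
  rewrite (sumZ_ext _ (fun x => (a*a)*(x*x) + (-2*a*K)*(x*(a*x/K)) + (K*K)*((a*x/K)*(a*x/K)))) in H2.
  2:{ intros x _. rewrite Z.mod_eq by lia. ring. }
  rewrite sumZ_lin3 in H2. fold S2 F in H2.
  set (Q := sumZ (fun x => a * x / K * (a * x / K)) (LZ k)) in *.
  rewrite H1.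
  transitivity ((1+a*a)*(6*S2) - 6*K*K*Q - 6*(S2 - (a * a * S2 + -2 * a * K * F + K * K * Q))).
  - ring.
  - rewrite <- H2, H3. ring.
Qed.

Definition ind (K y : Z) : Z := if andb (K <? 6*y) (6*y <? 5*K) then 1 else 0.

Lemma ind_val K y : (K < 6*y < 5*K /\ ind K y = 1) \/ (~ (K < 6*y < 5*K) /\ ind K y = 0).
Proof. unfold ind. destruct (Z.ltb_spec K (6*y)); destruct (Z.ltb_spec (6*y) (5*K)); cbn [andb]; lia. Qed.

Ltac fixmod K :=
  repeat match goal with
  | |- context [(?x mod K)] =>
      first [ rewrite (mod_lin x K 0) by lia | rewrite (mod_lin x K 1) by lia
            | rewrite (mod_lin x K 2) by lia | rewrite (mod_lin x K 3) by lia
            | rewrite (mod_lin x K 4) by lia | rewrite (mod_lin x K 5) by lia ]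
  end.

Lemma g_par K y : (K mod 6 = 1 \/ K mod 6 = 5) -> 1 <= y <= K - 1 ->
  ((6*y) mod K + (2*y) mod K + y + (3*y) mod K - ind K y) mod 2 = 0.
Proof.
  intros HK6 Hy.
  assert (Hm : exists m, K = 6*m+1 \/ K = 6*m+5).
  { exists (K/6). Z.div_mod_to_equations. lia. }
  destruct Hm as [m Hm]. clear HK6.
  assert (6*y <> K) by lia. assert (6*y <> 2*K) by lia. assert (6*y <> 3*K) by lia.
  assert (6*y <> 4*K) by lia. assert (6*y <> 5*K) by lia.
  assert (6*y < K \/ K < 6*y < 2*K \/ 2*K < 6*y < 3*K \/ 3*K < 6*y < 4*K \/ 4*K < 6*y < 5*K \/ 5*K < 6*y) as C by lia.
  destruct (ind_val K y) as [[? ->]|[? ->]];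
  destruct C as [C|[C|[C|[C|[C|C]]]]]; fixmod K; Z.div_mod_to_equations; lia.
Qed.

Lemma ind_sym K y : ind K (K - y) = ind K y.
Proof. destruct (ind_val K y) as [[? ->]|[? ->]]; destruct (ind_val K (K-y)) as [[? ->]|[? ->]]; lia. Qed.

Lemma count_ind K n : 1 <= K ->
  sumZ (ind K) (map Z.of_nat (seq 1 n)) = Z.max 0 (Z.min (Z.of_nat n) ((5*K-1)/6) - K/6).
Proof.
  intros HK. induction n; [simpl; Z.div_mod_to_equations; lia|].
  rewrite seq_S, map_app, sumZ_app. cbn [map]. rewrite sumZ_single, IHn.
  destruct (ind_val K (Z.of_nat (1+n))) as [[? ->]|[? ->]]; rewrite Nat2Z.inj_succ in *; Z.div_mod_to_equations; lia.
Qed.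

Lemma N_mod4 k : (Z.of_nat k mod 6 = 1 \/ Z.of_nat k mod 6 = 5) ->
  sumZ (ind (Z.of_nat k)) (LZ k) mod 4 = 0.
Proof.
  intros H. destruct k; [vm_compute in H; destruct H; discriminate|]. unfold LZ. rewrite count_ind by lia. replace (Z.of_nat (S k - 1)) with (Z.of_nat (S k) - 1) by lia.
  set (K := Z.of_nat (S k)) in *. clearbody K. Z.div_mod_to_equations. lia.
Qed.

Lemma parity k h : (1 <= k)%nat -> (Z.of_nat k mod 6 = 1 \/ Z.of_nat k mod 6 = 5) ->
  Z.gcd h (Z.of_nat k) = 1 ->
  (Tz k (6*h) + Tz k (2*h) + Tz k h + Tz k (3*h)) mod 2 = 0.
Proof.
  intros Hk H6 Hg.
  pose proof (N_mod4 k H6) as HN.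
  pose proof (reindex k h (ind (Z.of_nat k)) Hg) as HR.
  assert (Hg1 : Z.gcd (-1) (Z.of_nat k) = 1) by (change (-1) with (- (1)); rewrite Z.gcd_opp_l; apply Z.gcd_1_l).
  pose proof (fun f => reindex k (-1) f Hg1) as HR1.
  assert (Hrr := fun x => rho_range k h x Hg).
  unfold Tz. rewrite sumZ_add4.
  set (K := Z.of_nat k) in *. assert (HK : 0 < K) by (subst K; lia).
  assert (HK0 : K = Z.of_nat k) by reflexivity. clearbody K.
  set (g := fun y => (6*y) mod K + (2*y) mod K + y + (3*y) mod K).
  set (d := fun y => (g y - ind K y) / 2).
  rewrite (sumZ_ext _ (fun x => 1 * (x * ind K ((h*x) mod K)) + 2 * (x * d ((h*x) mod K)))).
  2:{ intros x Hx. apply in_LZ in Hx. rewrite <- HK0 in Hx.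
      specialize (Hrr x Hx).
      assert (Hp := g_par K ((h*x) mod K) ltac:(subst K; auto) Hrr).
      apply Z.div_exact in Hp; [|lia]. unfold d. fold (g ((h*x) mod K)) in Hp.
      set (e := (g ((h * x) mod K) - ind K ((h * x) mod K)) / 2) in *.
      assert (g ((h*x) mod K) = ind K ((h*x) mod K) + 2 * e) by lia.
      transitivity (x * g ((h*x) mod K)).
      - unfold g. rewrite <- !Z.mul_assoc.
        rewrite <- (Z.mul_mod_idemp_r 6 (h*x)), <- (Z.mul_mod_idemp_r 2 (h*x)),
                <- (Z.mul_mod_idemp_r 3 (h*x)) by lia. ring.
      - rewrite H. ring. }
  rewrite sumZ_lin2.
  set (A := sumZ (fun x => x * ind K ((h * x) mod K)) (LZ k)).
  assert (HA0 : sumZ (fun x => ((-1*x) mod K) * ind K ((h*((-1*x) mod K)) mod K)) (LZ k)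
     = K * sumZ (fun x => ind K ((h * x) mod K)) (LZ k) + (-1) * A).
  { unfold A. rewrite <- sumZ_lin2. apply sumZ_ext. intros x Hx. apply in_LZ in Hx. rewrite <- HK0 in *.
    assert (E1 : (-1 * x) mod K = K - x) by (rewrite (mod_lin _ _ (-1)); lia).
    rewrite E1.
    assert (E2 : (h * (K - x)) mod K = K - (h*x) mod K).
    { replace (h * (K - x)) with (- (h*x) + h * K) by ring. rewrite Z.mod_add by lia.
      apply Z.mod_opp_l_nz; [lia|]. specialize (Hrr x Hx). lia. }
    rewrite E2, ind_sym. ring. }
  assert (HA : A = K * sumZ (fun x => ind K ((h * x) mod K)) (LZ k) + (-1) * A).
  { rewrite <- HA0. unfold A. apply (HR1 (fun x => x * ind K ((h * x) mod K))). }
  rewrite <- HR in HA.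
  apply Z.mod_divide in HN; [|lia]. destruct HN as [t Ht]. rewrite Ht in HA.
  assert (A = 2 * (K * t)) by lia.
  fold A. rewrite H. set (X := sumZ _ _).
  replace (1 * (2 * (K * t)) + 2 * X) with ((K*t + X) * 2) by ring. apply Z.mod_mul. lia.
Qed.

Lemma rp_mul a b c : rel_prime a c -> rel_prime b c -> rel_prime (a*b) c.
Proof. intros. apply rel_prime_sym, rel_prime_mult; apply rel_prime_sym; auto. Qed.

Lemma div_combine a b n : (a | n) -> (b | n) -> rel_prime a b -> (a*b | n).
Proof.
  intros [u Hu] Hb Hr. subst n. apply Zgcd_1_rel_prime in Hr.
  assert (Hb' : (b | a * u)) by (rewrite Z.mul_comm; auto).
  apply Z.gauss in Hb'; [|rewrite Z.gcd_comm; auto].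
  destruct Hb' as [v Hv]. subst u. exists v. ring.
Qed.

Section Keys.
Variables (k : nat) (h h' : Z).
Hypothesis hk6 : Z.gcd (Z.of_nat k) 6 = 1.
Hypothesis hhk : Z.gcd h (Z.of_nat k) = 1.
Hypothesis hinv : (Z.of_nat k | h * h' + 1).
Hypothesis h6 : (6 | h').

Lemma K6 : Z.of_nat k mod 6 = 1 \/ Z.of_nat k mod 6 = 5.
Proof.
  set (K := Z.of_nat k) in *.
  assert (Hr := Z.mod_pos_bound K 6 ltac:(lia)).
  assert (HD := Z.div_mod K 6 ltac:(lia)).
  set (r := K mod 6) in *. set (q := K / 6) in *.
  assert (Hd : forall d, 1 < d -> (d | K) -> (d | 6) -> False).
  { intros d Hd1 HdK Hd6. assert (H := Z.gcd_greatest K 6 d HdK Hd6). rewrite hk6 in H.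
    apply Z.divide_pos_le in H; lia. }
  assert (r <> 0) by (intro; apply (Hd 2); [lia | exists (3*q); lia | exists 3; lia]).
  assert (r <> 2) by (intro; apply (Hd 2); [lia | exists (3*q+1); lia | exists 3; lia]).
  assert (r <> 3) by (intro; apply (Hd 3); [lia | exists (2*q+1); lia | exists 2; lia]).
  assert (r <> 4) by (intro; apply (Hd 2); [lia | exists (3*q+2); lia | exists 3; lia]).
  lia.
Qed.

Lemma k_pos : (1 <= k)%nat.
Proof. pose proof K6. destruct k; [vm_compute in H; destruct H; discriminate | lia]. Qed.

Lemma K24 : exists j, Z.of_nat k * Z.of_nat k - 1 = 24 * j.
Proof.
  pose proof K6 as H. set (K := Z.of_nat k) in *. clearbody K.
  assert (HD := Z.div_mod K 12 ltac:(lia)).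
  assert (Hr : K mod 12 = 1 \/ K mod 12 = 5 \/ K mod 12 = 7 \/ K mod 12 = 11)
    by (Z.div_mod_to_equations; lia).
  set (p := K / 12) in *. rewrite HD.
  destruct Hr as [-> | [-> | [-> | ->]]].
  - exists (6*p*p + p). ring.
  - exists (6*p*p + 5*p + 1). ring.
  - exists (6*p*p + 7*p + 2). ring.
  - exists (6*p*p + 11*p + 5). ring.
Qed.

Lemma rp_small a : (a = 2 \/ a = 3 \/ a = 6) -> rel_prime a (Z.of_nat k).
Proof.
  intros Ha. pose proof K6 as H. apply Zgcd_1_rel_prime.
  rewrite <- Z.gcd_mod by lia.
  set (K := Z.of_nat k) in *. clearbody K.
  destruct Ha as [-> | [-> | ->]].
  - replace (K mod 2) with 1 by (Z.div_mod_to_equations; lia). reflexivity.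
  - assert (K mod 3 = 1 \/ K mod 3 = 2) as [-> | ->] by (Z.div_mod_to_equations; lia); reflexivity.
  - destruct H as [-> | ->]; reflexivity.
Qed.

Lemma gcd_ah a : (a = 1 \/ a = 2 \/ a = 3 \/ a = 6) -> Z.gcd (a*h) (Z.of_nat k) = 1.
Proof.
  intros Ha. apply Zgcd_1_rel_prime. apply rp_mul; [|apply Zgcd_1_rel_prime; auto].
  destruct Ha as [-> | Ha]; [apply rel_prime_1|apply rp_small; lia].
Qed.

Lemma rpKK72h : rel_prime (Z.of_nat k * Z.of_nat k) (72*h).
Proof.
  assert (rel_prime (72*h) (Z.of_nat k)).
  { apply rp_mul; [|apply Zgcd_1_rel_prime; auto].
    replace 72 with (6*(6*2)) by reflexivity.
    apply rp_mul; [apply rp_small; lia|]. apply rp_mul; apply rp_small; lia. }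
  apply rel_prime_sym. apply rel_prime_sym in H. apply rel_prime_sym. apply rp_mul; auto.
Qed.

Lemma rpKK a : (a = 18 \/ a = 36) -> rel_prime a (Z.of_nat k * Z.of_nat k).
Proof.
  intros Ha. apply rel_prime_sym. apply rp_mul; apply rel_prime_sym;
  (destruct Ha as [-> | ->]; [replace 18 with (6*3) by reflexivity | replace 36 with (6*6) by reflexivity];
   apply rp_mul; apply rp_small; lia).
Qed.

Lemma key1 : (36 * Z.of_nat k * Z.of_nat k |
   18 * (Tz k (6*h) + Tz k (2*h) + Tz k h - Tz k (3*h)) + Z.of_nat k * (9*h - 2*h') * (Z.of_nat k * Z.of_nat k - 1)).
Proof.
  pose proof k_pos as Hk. pose proof K6 as HK6. destruct K24 as [j Hj].
  pose proof (parity k h Hk HK6 hhk) as Hpar.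
  pose proof (L1 k (6*h) Hk (gcd_ah 6 ltac:(lia))) as L6.
  pose proof (L1 k (2*h) Hk (gcd_ah 2 ltac:(lia))) as L2.
  pose proof (L1 k h Hk hhk) as L1'.
  pose proof (L1 k (3*h) Hk (gcd_ah 3 ltac:(lia))) as L3.
  pose proof rpKK72h as Hrp. pose proof (rpKK 36 ltac:(lia)) as Hrp36.
  destruct hinv as [m Hm]. destruct h6 as [t Ht].
  apply Z.mod_divide in Hpar; [|lia]. destruct Hpar as [e He].
  set (K := Z.of_nat k) in *. clearbody K.
  set (T6 := Tz k (6*h)) in *. set (T2 := Tz k (2*h)) in *. set (T1 := Tz k h) in *. set (T3 := Tz k (3*h)) in *.
  set (Q6 := Qz k (6*h)) in *. set (Q2 := Qz k (2*h)) in *. set (Q1 := Qz k h) in *. set (Q3 := Qz k (3*h)) in *.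
  clearbody T6 T2 T1 T3 Q6 Q2 Q1 Q3.
  rewrite <- Z.mul_assoc. apply div_combine; [| |exact Hrp36].
  - rewrite Hj, Ht. exists (e - T3 + 6*j*K*h - 8*j*K*t). lia.
  - apply (Gauss _ (72*h)); auto.
    exists (216*(2+9*h*h)*(K-1) - 144*m*(K*K-1) - 108*Q6 - 324*Q2 - 648*Q1 + 216*Q3).
    assert (Hm2 : 144*K*(K*K-1)*(h*h'+1) = 144*K*(K*K-1)*(m*K)) by (rewrite Hm; ring).
    lia.
Qed.

Lemma key2 : (18 * Z.of_nat k * Z.of_nat k |
   9 * (Tz k (3*h) + Tz k (2*h) + Tz k h - 3 * Tz k (6*h)) - Z.of_nat k * (9*h + h') * (Z.of_nat k * Z.of_nat k - 1)).
Proof.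
  pose proof k_pos as Hk. pose proof K6 as HK6. destruct K24 as [j Hj].
  pose proof (parity k h Hk HK6 hhk) as Hpar.
  pose proof (L1 k (6*h) Hk (gcd_ah 6 ltac:(lia))) as L6.
  pose proof (L1 k (2*h) Hk (gcd_ah 2 ltac:(lia))) as L2.
  pose proof (L1 k h Hk hhk) as L1'.
  pose proof (L1 k (3*h) Hk (gcd_ah 3 ltac:(lia))) as L3.
  pose proof rpKK72h as Hrp. pose proof (rpKK 18 ltac:(lia)) as Hrp18.
  destruct hinv as [m Hm]. destruct h6 as [t Ht].
  apply Z.mod_divide in Hpar; [|lia]. destruct Hpar as [e He].
  set (K := Z.of_nat k) in *. clearbody K.
  set (T6 := Tz k (6*h)) in *. set (T2 := Tz k (2*h)) in *. set (T1 := Tz k h) in *. set (T3 := Tz k (3*h)) in *.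
  set (Q6 := Qz k (6*h)) in *. set (Q2 := Qz k (2*h)) in *. set (Q1 := Qz k h) in *. set (Q3 := Qz k (3*h)) in *.
  clearbody T6 T2 T1 T3 Q6 Q2 Q1 Q3.
  rewrite <- Z.mul_assoc. apply div_combine; [| |exact Hrp18].
  - rewrite Hj, Ht. exists (e - 2*T6 - 12*j*K*h - 8*j*K*t). lia.
  - apply (Gauss _ (72*h)); auto.
    exists (216*(1-9*h*h)*(K-1) - 72*m*(K*K-1) - 6*(18*Q3 + 27*Q2 + 54*Q1 - 27*Q6)).
    assert (Hm2 : 72*K*(K*K-1)*(h*h'+1) = 72*K*(K*K-1)*(m*K)) by (rewrite Hm; ring).
    lia.
Qed.
End Keys.

Close Scope Z_scope.
Open Scope R_scope.

Lemma Int_part_unique r q : IZR q <= r < IZR q + 1 -> Int_part r = q.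
Proof.
  intros [H1 H2]. destruct (base_Int_part r) as [B1 B2].
  destruct (Z.lt_trichotomy (Int_part r) q) as [L|[E|L]]; auto.
  - apply Zlt_le_succ in L. apply IZR_le in L. rewrite succ_IZR in L. lra.
  - apply Zlt_le_succ in L. apply IZR_le in L. rewrite succ_IZR in L. lra.
Qed.

Lemma floor_div n d : (0 < d)%Z -> Rfloor (IZR n / IZR d) = (n / d)%Z.
Proof.
  intros Hd. unfold Rfloor. apply Int_part_unique.
  pose proof (Z.div_mod n d ltac:(lia)) as E. pose proof (Z.mod_pos_bound n d Hd) as B.
  set (q := (n / d)%Z) in *. set (r := (n mod d)%Z) in *.
  assert (Hd' : 0 < IZR d) by (apply IZR_lt; auto).
  assert (Er : IZR n / IZR d = IZR q + IZR r / IZR d).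
  { rewrite E, plus_IZR, mult_IZR. field. lra. }
  rewrite Er.
  assert (0 <= IZR r) by (apply IZR_le; lia).
  assert (IZR r < IZR d) by (apply IZR_lt; lia).
  split.
  - assert (0 <= IZR r / IZR d) by (apply Rdiv_le_0_compat; lra). lra.
  - assert (IZR r / IZR d < 1).
    { apply (Rmult_lt_reg_r (IZR d)); [lra|]. replace (IZR r / IZR d * IZR d) with (IZR r) by (field; lra). lra. }
    lra.
Qed.

Lemma DS_list (a : Z) (k : nat) (l : list nat) : (1 <= k)%nat ->
  fold_right Rplus 0
    (map (fun r : nat =>
            (INR r / INR k) *
            (IZR a * INR r / INR k - IZR (Rfloor (IZR a * INR r / INR k)) - 1 / 2)) l)
  = IZR (sumZ (fun x => x * ((a*x) mod Z.of_nat k))%Z (map Z.of_nat l)) / (IZR (Z.of_nat k))^2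
    - IZR (sumZ (fun x => x) (map Z.of_nat l)) / (2 * IZR (Z.of_nat k)).
Proof.
  intros Hk. assert (HK : (0 < Z.of_nat k)%Z) by lia.
  assert (HK' : 0 < IZR (Z.of_nat k)) by (apply IZR_lt; auto).
  induction l as [|r l IH]; simpl fold_right; simpl map; simpl sumZ.
  - field. lra.
  - rewrite IH. rewrite !INR_IZR_INZ.
    rewrite <- mult_IZR, floor_div by auto.
    rewrite Z.mod_eq by lia.
    rewrite !plus_IZR, !mult_IZR, !minus_IZR, !mult_IZR.
    field. lra.
Qed.

Lemma DS (a : Z) (k : nat) : (1 <= k)%nat ->
  dedekind_s a k = IZR (Tz k a) / (IZR (Z.of_nat k))^2 - (IZR (Z.of_nat k) - 1) / 4.
Proof.
  intros Hk. unfold dedekind_s. rewrite DS_list by auto. unfold Tz. fold (LZ k).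
  assert (HK' : 0 < IZR (Z.of_nat k)) by (apply IZR_lt; lia).
  pose proof (sum_id (k-1)) as S. fold (LZ k) in S.
  replace (Z.of_nat (k-1)) with (Z.of_nat k - 1)%Z in S by lia.
  apply (f_equal IZR) in S. rewrite mult_IZR, mult_IZR, plus_IZR, minus_IZR in S.
  assert (E : IZR (sumZ (fun x => x) (LZ k)) = (IZR (Z.of_nat k) - 1) * IZR (Z.of_nat k) / 2) by lra.
  rewrite E. field. lra.
Qed.

Lemma cexpi_mul x y : Cmult (cexpi x) (cexpi y) = cexpi (x + y).
Proof. unfold cexpi, Cmult. simpl. rewrite cos_plus, sin_plus. f_equal; ring. Qed.

Lemma cexpi_div x y : Cdiv (cexpi x) (cexpi y) = cexpi (x - y).
Proof.
  unfold Cdiv, cexpi, Cmult, Cinv. simpl. rewrite cos_minus, sin_minus.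
  assert (E : cos y * (cos y * 1) + sin y * (sin y * 1) = 1)
    by (pose proof (sin2_cos2 y); unfold Rsqr in *; lra).
  rewrite E. f_equal; field.
Qed.

Lemma cexpi_nat x m : cexpi (x + 2 * PI * INR m) = cexpi x.
Proof.
  unfold cexpi. replace (x + 2 * PI * INR m) with (x + 2 * INR m * PI) by ring.
  rewrite cos_period, sin_period. reflexivity.
Qed.

Lemma cexpi_per x n : cexpi (x + 2 * PI * IZR n) = cexpi x.
Proof.
  destruct (Z_le_gt_dec 0 n) as [H|H].
  - replace (IZR n) with (INR (Z.to_nat n)) by (rewrite INR_IZR_INZ; f_equal; lia).
    apply cexpi_nat.
  - set (y := x + 2 * PI * IZR n).
    rewrite <- (cexpi_nat y (Z.to_nat (-n))). f_equal.
    unfold y. rewrite INR_IZR_INZ. rewrite Z2Nat.id by lia. rewrite opp_IZR. ring.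
Qed.

Theorem lemma3p7 (k : nat) (h h' : Z)
  (hk6 : Z.gcd (Z.of_nat k) 6 = 1%Z)
  (hhk : Z.gcd h (Z.of_nat k) = 1%Z)
  (hinv : (Z.of_nat k | h * h' + 1)%Z)
  (h6 : (6 | h')%Z) :
  Cdiv (Cmult (Cmult (omega (6 * h) k) (omega (2 * h) k)) (omega h k))
       (omega (3 * h) k)
  = cexpi (- (2 * PI / (36 * INR k)) *
           (- 9 * INR k + 9 * INR k ^ 2 + IZR h * (- 9 + 9 * INR k ^ 2)
            + IZR h' * (2 - 2 * INR k ^ 2)))
  /\
  Cdiv (Cmult (Cmult (omega (3 * h) k) (omega (2 * h) k)) (omega h k))
       (Cmult (Cmult (omega (6 * h) k) (omega (6 * h) k)) (omega (6 * h) k))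
  = cexpi ((2 * PI / (18 * INR k)) *
           (9 * IZR h * (INR k ^ 2 - 1) + IZR h' * (INR k ^ 2 - 1))).
Proof.
  assert (Hk : (1 <= k)%nat) by (eapply k_pos; eauto).
  assert (HK1 := key1 k h h' ltac:(auto) ltac:(auto) ltac:(auto) ltac:(auto)).
  assert (HK2 := key2 k h h' ltac:(auto) ltac:(auto) ltac:(auto) ltac:(auto)).
  destruct HK1 as [n1 Hn1]. destruct HK2 as [n2 Hn2].
  apply (f_equal IZR) in Hn1. apply (f_equal IZR) in Hn2.
  repeat rewrite ?plus_IZR, ?mult_IZR, ?minus_IZR in Hn1.
  repeat rewrite ?plus_IZR, ?mult_IZR, ?minus_IZR in Hn2.
  unfold omega. rewrite !cexpi_mul, !cexpi_div. rewrite !DS by auto. rewrite !INR_IZR_INZ.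
  assert (HK' : 0 < IZR (Z.of_nat k)) by (apply IZR_lt; lia).
  set (K := IZR (Z.of_nat k)) in *.
  set (t6 := IZR (Tz k (6*h))) in *. set (t2 := IZR (Tz k (2*h))) in *.
  set (t1 := IZR (Tz k h)) in *. set (t3 := IZR (Tz k (3*h))) in *.
  clearbody K t6 t2 t1 t3.
  split.
  - match goal with |- cexpi ?a = cexpi ?b => rewrite <- (cexpi_per b n1) end. f_equal.
    assert (E : IZR n1 = (18 * (t6 + t2 + t1 - t3) + K * (9 * IZR h - 2 * IZR h') * (K * K - 1)) / (36 * K * K))
      by (rewrite Hn1; field; lra).
    rewrite E. field. lra.
  - match goal with |- cexpi ?a = cexpi ?b => rewrite <- (cexpi_per b n2) end. f_equal.
    assert (E : IZR n2 = (9 * (t3 + t2 + t1 - 3 * t6) - K * (9 * IZR h + IZR h') * (K * K - 1)) / (18 * K * K))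
      by (rewrite Hn2; field; lra).
    rewrite E. field. lra.
Qed.
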